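(* Let $P$ be a finite poset and fix $\alpha^{B},\omega^{B}>0$. For every $\pi\in\mathbb R_{>0}^P$ and every $p\in P$, \[ \lim_{n\to\infty}\Big(\prod_{i=0}^{n-1}T_p^{B}\big((\rho^{B})^i(\pi)\big)\Big)^{1/n}=1, \] i.e. $T_p^{B}$ is multiplicatively $1$-mesic under birational rowmotion.
   Context: Let $\widehat P$ be $P$ with a new minimum $\widehat0$ and maximum $\widehat1$ adjoined; any $\pi\in\mathbb R_{>0}^P$ is extended by $\pi(\widehat0)=\alpha^{B}$, $\pi(\widehat1)=\omega^{B}$. For $p\in P$ the birational toggle $\tau_p^{B}$ changes only the value at $p$, replacing it by $\big(\sum_{r\in\widehat P,\,r\lessdot p}\pi(r)\big)\big/\big(\pi(p)\sum_{r\in\widehat P,\,p\lessdot r}\pi(r)^{-1}\big)$. Birational rowmotion is $\rho^{B}=\tau^{B}_{p_1}\circ\cdots\circ\tau^{B}_{p_m}$ for any linear extension $p_1,\dots,p_m$ of $P$ (independent of the choice). Define $T_p^{+,B}(\pi)=\pi(p)/\sum_{r\lessdot p}\pi(r)$, $T_p^{-,B}(\pi)=1/\big(\pi(p)\sum_{p\lessdot r}\pi(r)^{-1}\big)$ (covers taken in $\widehat P$), and $T_p^{B}=T_p^{+,B}/T_p^{-,B}$. *)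

(* Defs.v *)
From HB Require Import structures.
From mathcomp Require Import all_boot all_order all_algebra.
From mathcomp Require Import all_classical all_reals all_analysis.
Set Implicit Arguments. Unset Strict Implicit. Unset Printing Implicit Defensive.
Import Order.TTheory GRing.Theory Num.Theory.
Local Open Scope ring_scope.

Section Birational.
Variables (d : Order.disp_t) (P : finPOrderType d) (R : realType).

(* The bounded poset \hat P: None = \hat 0, Some None = \hat 1,
   Some (Some p) = p. *)
Definition hatP := option (option P).

Definition hle (x y : hatP) : bool :=
  match x, y with
  | None, _ => true
  | _, None => false
  | Some None, Some None => true
  | Some None, Some (Some _) => false
  | Some (Some _), Some None => true
  | Some (Some p), Some (Some q) => (p <= q)%O
  end.

Definition hlt (x y : hatP) : bool := (x != y) && hle x y.

Definition hcov (x y : hatP) : bool :=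
  hlt x y && [forall z : hatP, ~~ (hlt x z && hlt z y)].

Definition hval (alpha omega : R) (pi : P -> R) (x : hatP) : R :=
  match x with
  | None => alpha
  | Some None => omega
  | Some (Some p) => pi p
  end.

Definition inP (p : P) : hatP := Some (Some p).

Definition sum_down alpha omega (pi : P -> R) (p : P) : R :=
  \sum_(r : hatP | hcov r (inP p)) hval alpha omega pi r.

Definition sum_up_inv alpha omega (pi : P -> R) (p : P) : R :=
  \sum_(r : hatP | hcov (inP p) r) (hval alpha omega pi r)^-1.

Definition btoggle alpha omega (p : P) (pi : P -> R) : P -> R :=
  fun q => if q == p then
             sum_down alpha omega pi p / (pi p * sum_up_inv alpha omega pi p)
           else pi q.

Definition linear_extension (l : seq P) : Prop :=
  perm_eq l (enum P) /\ pairwise (fun x y => ~~ (y < x)%O) l.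

Definition browmotion alpha omega (l : seq P) : (P -> R) -> (P -> R) :=
  foldr (fun p f => btoggle alpha omega p \o f) id l.

Definition Tplus alpha omega (p : P) (pi : P -> R) : R :=
  pi p / sum_down alpha omega pi p.

Definition Tminus alpha omega (p : P) (pi : P -> R) : R :=
  (pi p * sum_up_inv alpha omega pi p)^-1.

Definition TB alpha omega (p : P) (pi : P -> R) : R :=
  Tplus alpha omega p pi / Tminus alpha omega p pi.

End Birational.

(* Main.v *)
Require Import Defs.
From HB Require Import structures.
From mathcomp Require Import all_boot all_order all_algebra.
From mathcomp Require Import all_classical all_reals all_analysis.
From mathcomp Require Import zify.
Import Order.TTheory GRing.Theory Num.Theory numFieldNormedType.Exports.
Set Implicit Arguments. Unset Strict Implicit. Unset Printing Implicit Defensive.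
Local Open Scope ring_scope.

Section Ord.
Variables (d : Order.disp_t) (P : finPOrderType d).
Local Notation H := (hatP P).

Lemma hle_refl (x : H) : hle x x.
Proof. by case: x => [[a|]|] //=. Qed.

Lemma hle_trans (x y z : H) : hle x y -> hle y z -> hle x z.
Proof.
case: x => [[a|]|]; case: y => [[b|]|]; case: z => [[c|]|] //=.
exact: le_trans.
Qed.

Lemma hle_anti (x y : H) : hle x y -> hle y x -> x = y.
Proof.
case: x => [[a|]|]; case: y => [[b|]|] //= h1 h2.
by rewrite (@le_anti _ _ a b) ?h1 ?h2.
Qed.

Lemma hlt_irr (x : H) : hlt x x = false.
Proof. by rewrite /hlt eqxx. Qed.

Lemma hlt_trans (x y z : H) : hlt x y -> hlt y z -> hlt x z.
Proof.
rewrite /hlt => /andP[nxy lxy] /andP[nyz lyz].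
rewrite (hle_trans lxy lyz) andbT; apply/eqP => exz.
move: exz lyz nxy => <- lyx; rewrite (hle_anti lxy lyx) eqxx //.
Qed.

Lemma hlt_None (x : H) : x != None -> hlt None x.
Proof. by rewrite /hlt eq_sym => ->. Qed.

Lemma hlt_top (x : H) : x != Some None -> hlt x (Some None).
Proof. by rewrite /hlt => ->; case: x => [[a|]|]. Qed.

Lemma hlt_Nonex (x : H) : hlt x None = false.
Proof. by case: x => [[a|]|]. Qed.

Lemma hlt_topx (x : H) : hlt (Some None) x = false.
Proof. by case: x => [[a|]|]. Qed.

Lemma hcov_lt (x y : H) : hcov x y -> hlt x y.
Proof. by case/andP. Qed.

Lemma hcovPP (a b : P) : hcov (inP a) (inP b) -> (a < b)%O.
Proof.
move/hcov_lt; rewrite /hlt /= => /andP[ne le].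
by rewrite lt_neqAle le andbT; apply: contraNN ne => /eqP ->.
Qed.

Definition below (x : H) := #|[set y : H | hlt y x]|.

Lemma below_lt (x y : H) : hlt x y -> (below x < below y)%N.
Proof.
move=> hxy; apply: proper_card; apply/properP; split.
  by apply/fintype.subsetP => z; rewrite !inE => hz; apply: hlt_trans hz hxy.
by exists x; rewrite !inE ?hxy ?hlt_irr.
Qed.

Lemma below_le (x : H) : (below x <= #|{: H}|)%N.
Proof. exact: max_card. Qed.

Lemma not_cov (x y : H) : hlt x y -> ~~ hcov x y -> exists z, hlt x z && hlt z y.
Proof.
rewrite /hcov => -> /= /forallPn [z]; rewrite negbK => hz; by exists z.
Qed.

Lemma cov_below (x y : H) : hlt x y -> exists z, hcov z y.
Proof.
move: x; suff: forall n (x : H), (#|{: H}| - below x <= n)%N -> hlt x y -> exists z, hcov z y.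
  by move=> h x; apply: (h _ x (leqnn _)).
elim=> [|n IH] x hn hxy.
  have := below_lt hxy; have := below_le y; lia.
case hc: (hcov x y); first by exists x.
have [w /andP[hxw hwy]] := not_cov hxy (negbT hc).
apply: (IH w) => //; have := below_lt hxw; have := below_le w; lia.
Qed.

Lemma cov_above (x y : H) : hlt x y -> exists z, hcov x z.
Proof.
move: y; suff: forall n (y : H), (below y <= n)%N -> hlt x y -> exists z, hcov x z.
  by move=> h y; apply: (h _ y (leqnn _)).
elim=> [|n IH] y hn hxy.
  have := below_lt hxy; lia.
case hc: (hcov x y); first by exists y.
have [w /andP[hxw hwy]] := not_cov hxy (negbT hc).
apply: (IH w) => //; have := below_lt hwy; lia.
Qed.

End Ord.
Section Sums.
Variables (d : Order.disp_t) (P : finPOrderType d) (R : realType).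
Variables (alpha omega : R).
Hypotheses (ha : 0 < alpha) (hw : 0 < omega).
Local Notation H := (hatP P).

Lemma psum_gt0 (I : finType) (Pr : pred I) (F : I -> R) i0 :
  Pr i0 -> (forall i, Pr i -> 0 < F i) -> 0 < \sum_(i | Pr i) F i.
Proof.
move=> h0 hF; rewrite (bigD1 i0) //=; apply: ltr_wpDr; last exact: hF.
by apply: sumr_ge0 => i /andP[hi _]; apply/ltW/hF.
Qed.

Lemma term_le_sum (I : finType) (Pr : pred I) (F : I -> R) i0 :
  Pr i0 -> (forall i, Pr i -> 0 <= F i) -> F i0 <= \sum_(i | Pr i) F i.
Proof.
move=> h0 hF; rewrite (bigD1 i0) //= lerDl.
by apply: sumr_ge0 => i /andP[hi _]; apply: hF.
Qed.

Lemma sum_hatP (p0 : P) (g : H -> R) :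
  \sum_(x : H) g x = g None + g (Some None) + \sum_(q : P) g (inP q).
Proof.
rewrite (bigD1 None) //= (bigD1 (Some None)) //= addrA.
congr (_ + _).
rewrite (reindex (@inP _ P)) /=; last first.
  exists (fun x : H => if x is Some (Some q) then q else p0) => //.
  by case=> [[a|]|] //=.
by apply: eq_bigl => q.
Qed.

Lemma hval_gt0 (s : P -> R) (x : H) : (forall q, 0 < s q) -> 0 < hval alpha omega s x.
Proof. by move=> hs; case: x => [[a|]|] //=. Qed.

Lemma sd_gt0 (s : P -> R) q : (forall q, 0 < s q) -> 0 < sum_down alpha omega s q.
Proof.
move=> hs; have [r hr] := cov_below (@hlt_None _ _ (inP q) isT).
rewrite /sum_down; apply: (@psum_gt0 _ (fun r => hcov r (inP q)) _ r hr) => x _; exact: hval_gt0.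
Qed.

Lemma su_gt0 (s : P -> R) q : (forall q, 0 < s q) -> 0 < sum_up_inv alpha omega s q.
Proof.
move=> hs; have [r hr] := cov_above (@hlt_top _ _ (inP q) isT).
rewrite /sum_up_inv; apply: (@psum_gt0 _ (fun x => hcov (inP q) x) _ r hr) => x _; rewrite invr_gt0; exact: hval_gt0.
Qed.

Lemma btoggle_pos (s : P -> R) q : (forall q, 0 < s q) ->
  forall x, 0 < btoggle alpha omega q s x.
Proof.
move=> hs x; rewrite /btoggle; case: ifP => // _.
by rewrite divr_gt0 ?mulr_gt0 ?sd_gt0 ?su_gt0.
Qed.

Lemma brow_pos (l : seq P) (s : P -> R) : (forall q, 0 < s q) ->
  forall x, 0 < browmotion alpha omega l s x.
Proof.
elim: l => [|a l IH] hs x //=.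
by apply: btoggle_pos => y; apply: IH.
Qed.

Lemma iter_pos (l : seq P) (s : P -> R) n : (forall q, 0 < s q) ->
  forall x, 0 < iter n (browmotion alpha omega l) s x.
Proof.
move=> hs; elim: n => [|n IH] x //=; exact: brow_pos.
Qed.

Lemma brow_notin (l : seq P) (s : P -> R) q : q \notin l ->
  browmotion alpha omega l s q = s q.
Proof.
elim: l => [|a l IH] //=; rewrite inE negb_or => /andP[nq nl].
by rewrite /btoggle (negbTE nq) IH.
Qed.

Lemma su_toggle_other (s : P -> R) a q : ~~ (q < a)%O ->
  sum_up_inv alpha omega (btoggle alpha omega a s) q = sum_up_inv alpha omega s q.
Proof.
move=> nqa; apply: eq_bigr => -[[b|]|] // hc /=.
rewrite /btoggle; case: eqP => // eb; subst b.
by move: nqa; rewrite (hcovPP hc).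
Qed.

Lemma key_gen (l : seq P) (s : P -> R) : (forall q, 0 < s q) ->
  uniq l -> pairwise (fun x y => ~~ (y < x)%O) l ->
  forall q, q \in l ->
  browmotion alpha omega l s q =
  sum_down alpha omega s q / (s q * sum_up_inv alpha omega (browmotion alpha omega l s) q).
Proof.
move=> hs; elim: l => [|a l IH] //= /andP[anl ul] /andP[hall pl] q.
rewrite inE => /orP[/eqP eq|ql].
  subst q; rewrite {1}/btoggle eqxx.
  set s1 := browmotion alpha omega l s.
  have e1 : s1 a = s a by rewrite /s1 brow_notin.
  have e2 : sum_down alpha omega s1 a = sum_down alpha omega s a.
    apply: eq_bigr => -[[b|]|] // hc /=.
    rewrite /s1 brow_notin //; apply: contraNN anl => bl.
    move/allP: hall => /(_ b bl); by rewrite (hcovPP hc).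
  rewrite e1 e2 su_toggle_other //.
  by rewrite lt_irreflexive.
have qa : q != a by apply: contraNN anl => /eqP <-.
rewrite /btoggle (negbTE qa) -/(btoggle _ _ _ _).
rewrite IH // su_toggle_other //.
by move/allP: hall => /(_ q ql).
Qed.

End Sums.
Section Cons.
Variables (d : Order.disp_t) (P : finPOrderType d) (R : realType).
Variables (alpha omega : R).
Hypotheses (ha : 0 < alpha) (hw : 0 < omega).
Variable (p0 : P).
Local Notation H := (hatP P).
Local Notation v := (hval alpha omega).

Definition ES (F : H -> H -> R) := \sum_(x : H) \sum_(y : H | hcov x y) F x y.

Lemma ES_x F : ES F = \sum_(y : H | hcov None y) F None y +
   \sum_(q : P) \sum_(y : H | hcov (inP q) y) F (inP q) y.
Proof.
rewrite /ES (sum_hatP p0) -addrA; congr (_ + _).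
rewrite [X in X + _]big_pred0 ?add0r // => y.
by rewrite /hcov hlt_topx.
Qed.

Lemma ES_y F : ES F = \sum_(x : H | hcov x (Some None)) F x (Some None) +
   \sum_(q : P) \sum_(x : H | hcov x (inP q)) F x (inP q).
Proof.
rewrite /ES (eq_bigr (fun x => \sum_y (if hcov x y then F x y else 0))); last first.
  by move=> x _; rewrite big_mkcond.
rewrite exchange_big (sum_hatP p0) -addrA.
rewrite [X in X + _ = _]big1 ?add0r; last by move=> x _; rewrite /hcov hlt_Nonex.
congr (_ + _); first by rewrite -big_mkcond.
by apply: eq_bigr => q _; rewrite -big_mkcond.
Qed.

Definition S (s : P -> R) := ES (fun x y => v s x / v s y).

Lemma edge_le (s : P -> R) x y : (forall q, 0 < s q) -> hcov x y -> v s x / v s y <= S s.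
Proof.
move=> hs hc; rewrite /S /ES.
apply: (le_trans _ (@term_le_sum _ _ predT _ x _ _)) => //=.
  apply: (@term_le_sum _ _ (fun y => hcov x y) (fun y => v s x / v s y) y) => // z _.
  by apply/ltW/divr_gt0; apply: hval_gt0.
by move=> z _; apply: sumr_ge0 => w _; apply/ltW/divr_gt0; apply: hval_gt0.
Qed.

Variable (l : seq P).
Hypothesis hl : linear_extension l.

Lemma key_row (s : P -> R) : (forall q, 0 < s q) -> forall q,
  browmotion alpha omega l s q =
  sum_down alpha omega s q / (s q * sum_up_inv alpha omega (browmotion alpha omega l s) q).
Proof.
move=> hs q; case: hl => hp hpw; apply: key_gen => //.
  by rewrite (perm_uniq hp) enum_uniq.
by rewrite (perm_mem hp) mem_enum.
Qed.

Lemma key_mul (s : P -> R) : (forall q, 0 < s q) -> forall q,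
  browmotion alpha omega l s q * (s q * sum_up_inv alpha omega (browmotion alpha omega l s) q)
  = sum_down alpha omega s q.
Proof.
move=> hs q; rewrite key_row // divfK //.
by rewrite gt_eqF // mulr_gt0 ?su_gt0 //; apply: brow_pos.
Qed.

Lemma S_cons (s : P -> R) : (forall q, 0 < s q) -> S (browmotion alpha omega l s) = S s.
Proof.
move=> hs; set s' := browmotion alpha omega l s.
have hs' : forall q, 0 < s' q by apply: brow_pos.
have K q : s' q * (s q * sum_up_inv alpha omega s' q) = sum_down alpha omega s q.
  exact: key_mul.
have Kq q : sum_down alpha omega s q / s q = s' q * sum_up_inv alpha omega s' q.
  by rewrite -K mulrCA mulrC mulKf // gt_eqF.
have Kf q : \sum_(x : H | hcov x (inP q)) v s x / v s' (inP q) =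
            \sum_(y : H | hcov (inP q) y) v s (inP q) / v s' y.
  rewrite -mulr_suml -mulr_sumr /= -/(sum_down _ _ _ _).
  rewrite (_ : \sum_(i | hcov (inP q) i) (v s' i)^-1 = sum_up_inv alpha omega s' q) //.
  by rewrite -K mulrC mulKf // gt_eqF.
have flow : \sum_(x : H | hcov x (Some None)) v s x / v s' (Some None) =
            \sum_(y : H | hcov None y) v s None / v s' y.
  have e1 := ES_x (fun x y => v s x / v s' y).
  have e2 := ES_y (fun x y => v s x / v s' y).
  rewrite e2 in e1; move: e1; rewrite (eq_bigr _ (fun q _ => Kf q)).
  by move/addIr.
rewrite /S ES_x ES_y /=.
rewrite (_ : \sum_(y | hcov None y) alpha / v s' y = \sum_(x | hcov x (Some None)) v s x / omega);
  last by rewrite flow.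
congr (_ + _); apply: eq_bigr => q _ /=.
rewrite -mulr_suml -mulr_sumr -/(sum_down _ _ _ _) Kq.
by [].
Qed.

End Cons.
Section Bounds.
Variables (d : Order.disp_t) (P : finPOrderType d) (R : realType).
Variables (alpha omega : R).
Hypotheses (ha : 0 < alpha) (hw : 0 < omega).
Local Notation H := (hatP P).
Local Notation v := (hval alpha omega).
Variables (s : P -> R) (c : R).
Hypotheses (hs : forall q, 0 < s q) (c1 : 1 <= c)
  (he : forall x y, hcov x y -> v s x / v s y <= c).

Lemma c0 : 0 < c. Proof. exact: lt_le_trans ltr01 c1. Qed.

Lemma le_div_pow a n : 0 < a -> a / c ^+ n <= a.
Proof.
move=> a0; rewrite ler_pdivrMr ?exprn_gt0 ?c0 //.
by apply: ler_peMr; [exact: ltW | exact: exprn_ege1].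
Qed.

Lemma lowb n (x : H) : (below x <= n)%N -> alpha / c ^+ n <= v s x.
Proof.
elim: n x => [|n IH] x hn.
  case: x hn => [x|] hn; last by rewrite /= expr0 divr1.
  by have := below_lt (@hlt_None _ _ (Some x) isT); lia.
case: x hn => [x|] hn; last by apply: le_div_pow.
have [r hr] := cov_below (@hlt_None _ _ (Some x) isT).
have hrb := below_lt (hcov_lt hr).
have := IH r (leq_trans (hrb) hn) => hIH.
have := he hr; rewrite ler_pdivrMr ?hval_gt0 // => hr2.
rewrite exprSr invfM mulrA ler_pdivrMr ?c0 //.
by rewrite [_ * c]mulrC; exact: (le_trans hIH hr2).
Qed.

Lemma upb n (x : H) : (#|{: H}| - below x <= n)%N -> v s x <= omega * c ^+ n.
Proof.
elim: n x => [|n IH] x hn.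
  case: (eqVneq x (Some None)) => [->|nx] /=; first by rewrite expr0 mulr1.
  have := below_lt (hlt_top nx); have := below_le (Some None : H); lia.
case: (eqVneq x (Some None)) => [->|nx] /=.
  by apply: ler_peMr; [exact: ltW | exact: exprn_ege1].
have [y hy] := cov_above (hlt_top nx).
have hyb := below_lt (hcov_lt hy).
have := IH y ltac:(have := below_le y; lia) => hIH.
have := he hy; rewrite ler_pdivrMr ?hval_gt0 // => hy2.
apply: (le_trans hy2); rewrite exprSr mulrA [_ * c]mulrC.
by rewrite ler_pM2l ?c0.
Qed.

End Bounds.
Local Open Scope classical_set_scope.
Lemma inv_nat_cvg (R : realType) (c : R) :
  (fun n : nat => expR (n%:R^-1 * c)) @ \oo --> (1 : R).
Proof.
rewrite -(cvg_shiftS).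
have h : (fun n : nat => (n.+1%:R : R)^-1 * c) @ \oo --> (0 : R).
  rewrite -(mul0r c); apply: cvgMr_tmp; exact: cvg_harmonic.
have := (@continuous_cvg _ _ _ _ _ _ expR _ (@continuous_expR R 0) h).
rewrite expR0; apply; exact: filter_on_Filter.
Qed.
Lemma pow_bnd_cvg (R : realType) (a : nat -> R) (m M : R) :
  0 < m -> (forall n, m <= a n <= M) ->
  (fun n : nat => powR (a n) (n%:R^-1)) @ \oo --> (1 : R).
Proof.
move=> m0 hb.
apply: (@squeeze_cvgr _ _ _ _ (fun n : nat => expR (n%:R^-1 * ln m))
   (fun n : nat => expR (n%:R^-1 * ln M))); last 2 first.
- exact: inv_nat_cvg.
- exact: inv_nat_cvg.
near=> n.
have /andP[h1 h2] := hb n.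
have an0 : 0 < a n by apply: lt_le_trans h1.
rewrite /powR gt_eqF // !ler_expR.
have ni : 0 <= (n%:R : R)^-1 by rewrite invr_ge0.
apply/andP; split; apply: ler_wpM2l => //; rewrite ler_ln ?posrE //.
by apply: lt_le_trans h2.
Unshelve. all: end_near.
Qed.
Unset Implicit Arguments.
Local Open Scope ring_scope.

Theorem lemma6p4 (d : Order.disp_t) (P : finPOrderType d) (R : realType)
  (alpha omega : R) (l : seq P) (pi : P -> R) (p : P) :
  0 < alpha -> 0 < omega -> (forall q, 0 < pi q) ->
  linear_extension l ->
  (fun n : nat =>
     powR (\prod_(i < n) TB alpha omega p (iter i (browmotion alpha omega l) pi))
          (n%:R^-1))
    @ \oo --> (1 : R).
Proof.
move=> ha hw hpi hl.
set sig := fun n => iter n (browmotion alpha omega l) pi.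
have pos n : forall q, 0 < sig n q by move=> q; apply: iter_pos.
have Scons n : S alpha omega (sig n) = S alpha omega pi.
  elim: n => [|n IH] //; rewrite /sig iterS -/(sig n) -IH.
  exact: (S_cons ha hw p hl).
set S0 := S alpha omega pi.
have S0ge0 : 0 <= S0.
  by apply: sumr_ge0 => x _; apply: sumr_ge0 => y _; apply/ltW/divr_gt0; apply: hval_gt0.
set c := S0 + 1.
have c1 : 1 <= c by rewrite /c lerDr.
have cpos : 0 < c by apply: lt_le_trans ltr01 c1.
have he n x y : hcov x y -> hval alpha omega (sig n) x / hval alpha omega (sig n) y <= c.
  move=> hc; apply: (le_trans (edge_le ha hw (pos n) hc)).
  by rewrite Scons /c lerDl.
set N := #|{: hatP P}|.
have lo n x : alpha / c ^+ N <= hval alpha omega (sig n) x.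
  apply: (lowb ha hw (pos n) c1 (he n)); exact: below_le.
have up n x : hval alpha omega (sig n) x <= omega * c ^+ N.
  apply: (upb ha hw (pos n) c1 (he n)); by rewrite leq_subr.
set U := fun n => sig n p * sum_up_inv alpha omega (sig n) p.
have Usum n : U n = \sum_(y | hcov (inP p) y) hval alpha omega (sig n) (inP p) / hval alpha omega (sig n) y.
  by rewrite /U /sum_up_inv mulr_sumr.
have Ule n : U n <= S0.
  rewrite /S0 -(Scons n) Usum /S /ES.
  apply: (@term_le_sum _ _ predT (fun x => \sum_(y | hcov x y) hval alpha omega (sig n) x / hval alpha omega (sig n) y) (inP p)) => // x _.
  by apply: sumr_ge0 => y _; apply/ltW/divr_gt0; apply: hval_gt0.
set m0 := (alpha / c ^+ N) / (omega * c ^+ N).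
have m0pos : 0 < m0 by rewrite /m0 !(divr_gt0, mulr_gt0, exprn_gt0).
have Uge n : m0 <= U n.
  have [y hy] := cov_above (@hlt_top _ _ (inP p) isT).
  rewrite Usum; apply: le_trans (@term_le_sum _ _ (fun y => hcov (inP p) y) _ y hy _); last first.
    by move=> z _; apply/ltW/divr_gt0; apply: hval_gt0.
  rewrite ler_pdivlMr ?hval_gt0 //.
  apply: (le_trans _ (lo n (inP p))).
  rewrite /m0 -[X in _ <= X](@divfK _ (omega * c ^+ N)); last first.
    by rewrite gt_eqF // mulr_gt0 // exprn_gt0.
  by rewrite ler_pM2l // up.
have Upos n : 0 < U n by apply: lt_le_trans m0pos (Uge n).
have prodE n : \prod_(i < n) TB alpha omega p (sig i) = U 0%N / U n.
  elim: n => [|n IH]; first by rewrite big_ord0 divff // gt_eqF.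
  rewrite big_ord_recr /= IH /TB /Tminus -/(U n) invrK.
  have KK := key_mul ha hw hl (pos n) p.
  have Un1 : U n.+1 = sum_down alpha omega (sig n) p / sig n p.
    rewrite -KK /U /sig iterS -/(sig n).
    by rewrite [RHS]mulrC [RHS]mulrCA mulKf ?gt_eqF.
  by rewrite Un1 /Tplus invf_div [_ * U n]mulrC mulrA divfK ?gt_eqF.
have S0pos : 0 < S0 by apply: lt_le_trans (Upos 0%N) (Ule 0%N).
apply: (@pow_bnd_cvg _ (fun n => \prod_(i < n) TB alpha omega p (sig i)) (U 0%N / S0) (U 0%N / m0)).
  by rewrite divr_gt0.
move=> n; rewrite prodE; apply/andP; split.
  by rewrite ler_pM2l // lef_pV2 ?posrE.
by rewrite ler_pM2l // lef_pV2 ?posrE.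
Qed.
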